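(* Let $G$ be a finite group and $\rho':G\to\mathrm{U}(\mathcal{H})$ an irreducible unitary representation on a $d$-dimensional complex Hilbert space with character $\chi$. Let $H_1,H_2\leq G$ and let $\nu_i$ be a linear character of $H_i$ ($i=1,2$) such that $\sum_{s\in H_i}\chi(s)\overline{\nu_i(s)}=|H_i|$. Let $\Pi_{\nu_i}$ be the projection of $L^2(H_i)$ onto its $\nu_i$-isotypic (one-dimensional) subspace, $\Pi_{\nu_i}'$ its extension to $L^2(G)$ by zero (as in the context), and let $\Phi_i=(\rho'(g)v_i)_{g\in G}$ be group frames with Gram matrices $G_{\Phi_i}=\langle v_i,v_i\rangle\frac{|G|}{d}\Pi_\chi\Pi_{\nu_i}'$. Let $V_i\subseteq L^2(G)$ be the column space of $G_{\Phi_i}$ and $M:V_1\to V_2$ a $G$-linear unitary map, extended by $0$ on $V_1^\perp$. Then for every $a\in G$ there is $\lambda_a\in\mathbb{C}$, depending only on $a$, such that $$\lambda_a M[s,g]=\frac{1}{|H_1||H_2|}\sum_{h_1\in H_1}\sum_{h_2\in H_2}\overline{\nu_2(h_2)}\,\chi(a^{-1}h_2s^{-1}gh_1)\,\overline{\nu_1(h_1)}\quad\text{for all }s,g\in G,$$ where $M[s,g]=\langle M\delta_g,\delta_s\rangle$.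
   Context: For a finite group $K$, $L^2(K)$ is the space of functions $K\to\mathbb{C}$ with convolution $(f*h)(s)=\sum_{x\in K}f(x)h(x^{-1}s)$, basis $\delta_g$ (indicator of $\{g\}$), and left regular representation $\rho(g)f=\delta_g*f$. $\Pi_\chi f=\frac{\chi(1)}{|G|}\overline{\chi}*f$ on $L^2(G)$. The projection $\Pi_{\nu_i}$ on $L^2(H_i)$ is of the form $f\mapsto f*p_i$ for some $p_i\in L^2(H_i)$; $\Pi'_{\nu_i}$ is the operator $f\mapsto f*p_i'$ on $L^2(G)$ where $p_i'=p_i$ on $H_i$ and $p_i'=0$ on $G\setminus H_i$. The Gram matrix of $\Phi_i$ is $[\langle\rho'(g_2)v_i,\rho'(g_1)v_i\rangle]_{g_1,g_2\in G}$; $G$-linear means commuting with the left regular representation. *)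

(* Defs.v *)
From HB Require Import structures.
From mathcomp Require Import all_boot all_order all_fingroup all_algebra all_solvable all_field all_character.
Set Implicit Arguments. Unset Strict Implicit. Unset Printing Implicit Defensive.
Import Order.TTheory GRing.Theory Num.Theory.
Local Open Scope ring_scope.

(* The finite group G is the whole finGroupType gT (any finite group is one).
   L^2(G) is modelled by the algC-vector space {ffun gT -> algC}. *)
Notation L2 gT := {ffun gT -> algC}.

Section Defs.
Variable gT : finGroupType.

Definition dotL2 (f h : L2 gT) : algC := \sum_x f x * (h x)^*.

Definition conv (f h : L2 gT) : L2 gT :=
  [ffun s => \sum_x f x * h (x^-1 * s)%g].

Definition delta (g : gT) : L2 gT := [ffun x => (x == g)%:R].

Definition lreg (g : gT) (f : L2 gT) : L2 gT := conv (delta g) f.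

Definition PiChi (chi : 'CF([set: gT])) (f : L2 gT) : L2 gT :=
  conv [ffun x => chi 1%g / #|gT|%:R * (chi x)^*] f.

(* p_i' : the kernel of the projection onto the nu-isotypic subspace of
   L^2(H) (p = conj(nu)/|H| on H), extended by 0 on G \ H *)
Definition pext (H : {group gT}) (nu : 'CF(H)) : L2 gT :=
  [ffun x => if x \in H then (nu x)^* / #|H|%:R else 0].

Definition PiNuExt (H : {group gT}) (nu : 'CF(H)) (f : L2 gT) : L2 gT :=
  conv f (pext nu).

Definition mat (A : L2 gT -> L2 gT) (s g : gT) : algC := A (delta g) s.

Definition dotV d (u w : 'cV[algC]_d) : algC := \sum_j u j 0 * (w j 0)^*.

Definition unitary_repr d (rG : mx_representation algC [set: gT] d) :=
  forall g : gT, rG g *m (map_mx (fun z : algC => z^*) (rG g))^T = 1%:M.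

Definition group_frame d (rG : mx_representation algC [set: gT] d)
  (v : 'cV[algC]_d) :=
  forall w : 'cV[algC]_d, exists c : gT -> algC,
    w = \sum_g c g *: (rG g *m v).

Definition gram d (rG : mx_representation algC [set: gT] d)
  (v : 'cV[algC]_d) (g1 g2 : gT) : algC :=
  dotV (rG g2 *m v) (rG g1 *m v).

Definition in_colspace (K : gT -> gT -> algC) (f : L2 gT) : Prop :=
  exists c : gT -> algC, f = [ffun s => \sum_g c g * K s g].

End Defs.

Section Lin.
Variable gT : finGroupType.
Definition linL2 (M : L2 gT -> L2 gT) : Prop :=
  forall (a : algC) (f h : L2 gT),
    M [ffun x => a * f x + h x] = [ffun x => a * M f x + M h x].
End Lin.

(* Main.v *)
Require Import Defs.
From HB Require Import structures.
From mathcomp Require Import all_boot all_order all_fingroup all_algebra all_solvable all_field all_character.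
From mathcomp Require Import ring.
Set Implicit Arguments. Unset Strict Implicit. Unset Printing Implicit Defensive.
Import Order.TTheory GRing.Theory Num.Theory.
Local Open Scope ring_scope.

Lemma tr_pid (n r : nat) : (r <= n)%N -> \tr (pid_mx r : 'M[algC]_n) = r%:R.
Proof.
move=> lern; rewrite /mxtrace.
under eq_bigr do rewrite mxE eqxx /=.
rewrite -(big_mkord xpredT (fun i => ((i < r)%N)%:R)).
rewrite (big_cat_nat (n:=r)) //= [X in _ + X]big1_seq ?addr0; last first.
  by move=> i; rewrite mem_index_iota /= => /andP[ri _]; rewrite ltnNge ri.
rewrite big_nat_cond (eq_bigr (fun _ => 1)); last first.
  by move=> i; rewrite andbT => /andP[_ ->].
by rewrite -big_nat_cond sumr_const_nat subn0.
Qed.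

Lemma idem_rank1 (n : nat) (P : 'M[algC]_n) :
  P *m P = P -> \tr P = 1 -> \rank P = 1%N.
Proof.
move=> PP trP.
set L := col_ebase P; set U := row_ebase P; set r := \rank P.
have PE : P = L *m pid_mx r *m U by rewrite mulmx_ebase.
have Lu : L \in unitmx by apply: col_ebase_unit.
have Uu : U \in unitmx by apply: row_ebase_unit.
have lern : (r <= n)%N by apply: rank_leq_row.
have H1 : pid_mx r *m (U *m L) *m pid_mx r = pid_mx r :> 'M_n.
  have := PP; rewrite {1 2 3}PE => E.
  have := congr1 (fun X => invmx L *m X *m invmx U) E.
  rewrite !mulmxA mulVmx // mul1mx -!mulmxA mulmxV // mulmx1.
  by rewrite !mulmxA.
have : \tr P = r%:R.
  rewrite PE mxtrace_mulC mulmxA -(@pid_mx_id _ n n n r lern) mulmxA.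
  by rewrite mxtrace_mulC !mulmxA; move: H1; rewrite !mulmxA => ->; rewrite tr_pid.
by rewrite trP => /esym/eqP; rewrite pnatr_eq1 => /eqP.
Qed.

Lemma delta_sandwich k (X : 'M[algC]_k.+1) :
  (delta_mx ord0 ord0 : 'M_k.+1) *m X *m (delta_mx ord0 ord0 : 'M_k.+1)
  = X ord0 ord0 *: (delta_mx ord0 ord0 : 'M_k.+1).
Proof.
apply/matrixP => i j; rewrite !mxE (bigD1 ord0) //= big1 ?addr0; last first.
  by move=> l /negbTE nl; rewrite !mxE nl /= mulr0.
rewrite mxE (bigD1 ord0) //= big1 ?addr0; last first.
  by move=> l /negbTE nl; rewrite !mxE nl andbF mul0r.
rewrite !mxE !eqxx !andbT.
by case: (i == 0); case: (j == 0); rewrite /= ?mul1r ?mulr1 ?mul0r ?mulr0.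
Qed.

Lemma rank1_sandwich n (P Q : 'M[algC]_n) :
  \rank P = 1%N -> \rank Q = 1%N ->
  exists U : 'M_n, exists phi : 'M_n -> algC, forall B, P *m B *m Q = phi B *: U.
Proof.
case: n P Q => [|k] P Q rP rQ.
  by exists 0, (fun _ => 0) => B; rewrite scale0r; apply: flatmx0.
have pidE : pid_mx 1 = (delta_mx ord0 ord0 : 'M[algC]_k.+1).
  apply/matrixP => i j; rewrite !mxE.
  by case: i j => [[|i] Hi] [[|j] Hj]; rewrite /= ?andbF.
exists (col_ebase P *m (delta_mx ord0 ord0 : 'M_k.+1) *m row_ebase Q).
exists (fun B => (row_ebase P *m B *m col_ebase Q) ord0 ord0) => B.
rewrite -[P in LHS]mulmx_ebase -[Q in LHS]mulmx_ebase rP rQ pidE.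
rewrite -!mulmxA scalemxAr; congr (_ *m _).
rewrite !mulmxA scalemxAl; congr (_ *m _).
by rewrite -delta_sandwich !mulmxA.
Qed.

Lemma conv_deltaE (gT : finGroupType) (g : gT) (f : L2 gT) s :
  conv (delta g) f s = f (g^-1 * s)%g.
Proof.
rewrite ffunE (bigD1 g) //= big1 ?addr0 => [|x nx]; first by rewrite ffunE eqxx mul1r.
by rewrite ffunE (negbTE nx) mul0r.
Qed.

Lemma conv_assoc (gT : finGroupType) (f h k : L2 gT) :
  conv (conv f h) k = conv f (conv h k).
Proof.
apply/ffunP => s; rewrite !ffunE.
under eq_bigr do rewrite ffunE mulr_suml.
rewrite exchange_big /=; apply: eq_bigr => x _.
rewrite ffunE mulr_sumr.
rewrite (reindex_inj (mulgI x)) /=; apply: eq_bigr => y _.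
by rewrite mulKg mulrA invMg mulgA.
Qed.

Lemma conv_central (gT : finGroupType) (k f : L2 gT) :
  (forall x y, k (x * y)%g = k (y * x)%g) -> conv k f = conv f k.
Proof.
move=> kC; apply/ffunP => s; rewrite !ffunE.
rewrite (reindex_inj (inj_comp (mulgI s) invg_inj)) /=.
apply: eq_bigr => y _; rewrite invMg invgK -mulgA mulVg mulg1 kC mulrC.
by [].
Qed.

Definition adj (gT : finGroupType) (f : L2 gT) : L2 gT := [ffun x => (f x^-1%g)^*].

Lemma dot_conv (gT : finGroupType) (f k h : L2 gT) :
  dotL2 (conv f k) h = dotL2 f (conv h (adj k)).
Proof.
rewrite /dotL2.
under eq_bigr do rewrite ffunE mulr_suml.
rewrite exchange_big /=; apply: eq_bigr => x _.
rewrite ffunE rmorph_sum mulr_sumr; apply: eq_bigr => y _.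
by rewrite ffunE rmorphM /= conjCK invMg invgK -mulrA [k _ * _]mulrC.
Qed.

Lemma adj_conv (gT : finGroupType) (f h : L2 gT) :
  adj (conv f h) = conv (adj h) (adj f).
Proof.
apply/ffunP => x; rewrite !ffunE rmorph_sum.
rewrite [RHS](reindex_inj (mulgI x)) /=; apply: eq_bigr => y _.
by rewrite !ffunE rmorphM /= !invMg !invgK mulKg mulrC.
Qed.

Definition rh (gT : finGroupType) d (rG : mx_representation algC [set: gT] d)
  (f : L2 gT) : 'M[algC]_d := \sum_x f x *: rG x.

Lemma rGM (gT : finGroupType) d (rG : mx_representation algC [set: gT] d) (x y : gT) :
  rG (x * y)%g = rG x *m rG y.
Proof. by rewrite repr_mxM ?inE. Qed.

Lemma chiE (gT : finGroupType) d (rG : mx_representation algC [set: gT] d) (x : gT) :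
  cfRepr rG x = \tr (rG x).
Proof. by rewrite cfunE inE mulr1n. Qed.

Lemma chiC (gT : finGroupType) d (rG : mx_representation algC [set: gT] d) (x y : gT) :
  cfRepr rG (x * y)%g = cfRepr rG (y * x)%g.
Proof. by rewrite !chiE !rGM mxtrace_mulC. Qed.

Lemma rh_conv (gT : finGroupType) d (rG : mx_representation algC [set: gT] d)
  (f h : L2 gT) : rh rG (conv f h) = rh rG f *m rh rG h.
Proof.
rewrite /rh mulmx_suml.
under eq_bigr do rewrite ffunE scaler_suml.
rewrite exchange_big /=; apply: eq_bigr => x _.
rewrite mulmx_sumr (reindex_inj (mulgI x)) /=; apply: eq_bigr => y _.
by rewrite mulKg rGM -scalemxAl -scalemxAr scalerA.
Qed.

Lemma conv_e (gT : finGroupType) d (rG : mx_representation algC [set: gT] d)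
  (f : L2 gT) :
  conv f [ffun x => cfRepr rG 1%g / #|gT|%:R * (cfRepr rG x)^*] =
  [ffun y => cfRepr rG 1%g / #|gT|%:R * \tr (rh rG f *m rG y^-1%g)].
Proof.
apply/ffunP => y; rewrite !ffunE /rh mulmx_suml raddf_sum mulr_sumr.
apply: eq_bigr => x _; rewrite ffunE -char_inv ?cfRepr_char // chiE.
by rewrite -scalemxAl /= mxtraceZ invMg invgK chiE rGM mxtrace_mulC mulrCA.
Qed.

Lemma cardgT_neq0 (gT : finGroupType) : #|gT|%:R != 0 :> algC.
Proof. by rewrite pnatr_eq0 -lt0n -cardsT cardG_gt0. Qed.

Lemma chi_norm (gT : finGroupType) d (rG : mx_representation algC [set: gT] d)
  (Hirr : mx_irreducible rG) :
  \sum_x cfRepr rG x * (cfRepr rG x)^* = #|gT|%:R.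
Proof.
have : cfRepr rG \in irr [set: gT].
  by apply/irr_reprP; exists (Representation rG).
case/irrP => i chiE'; have := cfnorm_irr i; rewrite -chiE' cfdotE cardsT.
move=> /(congr1 (fun z => #|gT|%:R * z)); rewrite mulrA mulfV ?mul1r ?mulr1.
  by rewrite (eq_bigl xpredT) // => x; rewrite inE.
by rewrite pnatr_eq0 -lt0n -cardsT cardG_gt0.
Qed.

Lemma rh_e (gT : finGroupType) d (rG : mx_representation algC [set: gT] d)
  (Hirr : mx_irreducible rG) :
  rh rG [ffun x => cfRepr rG 1%g / #|gT|%:R * (cfRepr rG x)^*] = 1%:M.
Proof.
set S := \sum_x (cfRepr rG x)^* *: rG x.
have cS : centgmx rG S.
  apply/centgmxP => g _; rewrite /S mulmx_suml mulmx_sumr.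
  rewrite [RHS](reindex_inj (conjg_inj g)) /=; apply: eq_bigr => y _.
  by rewrite cfunJ ?inE // -scalemxAl -scalemxAr -rGM -rGM -conjgC.
have [a Sa] := is_scalar_mxP (mx_abs_irr_cent_scalar (groupC Hirr) cS).
have dgt0 : (0 < d)%N by case/mx_irrP: Hirr.
have trS : a *+ d = #|gT|%:R.
  rewrite -mxtrace_scalar -Sa /S raddf_sum /= -(chi_norm Hirr).
  by apply: eq_bigr => x _; rewrite mxtraceZ chiE mulrC.
have -> : rh rG [ffun x => cfRepr rG 1%g / #|gT|%:R * (cfRepr rG x)^*] =
   (cfRepr rG 1%g / #|gT|%:R) *: S.
  rewrite /rh /S scaler_sumr; apply: eq_bigr => x _.
  by rewrite ffunE scalerA.
rewrite Sa scale_scalar_mx; congr (_%:M).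
have d0 : d%:R != 0 :> algC by rewrite pnatr_eq0 -lt0n.
have a0 : a != 0.
  apply/eqP => a0; move: trS; rewrite a0 mul0rn => /esym/eqP.
  by rewrite (negbTE (cardgT_neq0 gT)).
rewrite cfRepr1 -trS -mulr_natr; field.
by apply/andP.
Qed.

Definition eC (gT : finGroupType) d (rG : mx_representation algC [set: gT] d) : L2 gT :=
  [ffun x => cfRepr rG 1%g / #|gT|%:R * (cfRepr rG x)^*].

Lemma eC_central (gT : finGroupType) d (rG : mx_representation algC [set: gT] d) f :
  conv (eC rG) f = conv f (eC rG).
Proof. by apply: conv_central => x y; rewrite !ffunE chiC. Qed.

Lemma eC_idem (gT : finGroupType) d (rG : mx_representation algC [set: gT] d)
  (Hirr : mx_irreducible rG) : conv (eC rG) (eC rG) = eC rG.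
Proof.
rewrite [in LHS]/eC conv_e -/(eC rG) rh_e //.
by apply/ffunP => y; rewrite !ffunE mul1mx -chiE char_inv ?cfRepr_char.
Qed.

Lemma eC_adj (gT : finGroupType) d (rG : mx_representation algC [set: gT] d) :
  adj (eC rG) = eC rG.
Proof.
apply/ffunP => y; rewrite !ffunE char_inv ?cfRepr_char // rmorphM /= conjCK.
rewrite cfRepr1 rmorphM /= rmorph_nat fmorphV /= rmorph_nat //.
Qed.

Lemma pext_sum (gT : finGroupType) (H : {group gT}) (nu : 'CF(H)) (F : gT -> algC) :
  \sum_x pext nu x * F x = #|H|%:R^-1 * \sum_(x in H) (nu x)^* * F x.
Proof.
rewrite mulr_sumr (bigID (mem H)) /= [X in _ + X]big1 ?addr0.
  by apply: eq_bigr => x xH; rewrite ffunE xH mulrAC mulrC mulrA.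
by move=> x /negbTE xH; rewrite ffunE xH mul0r.
Qed.

Lemma pext_idem (gT : finGroupType) (H : {group gT}) (nu : 'CF(H))
  (Hnu : nu \is a linear_char) : conv (pext nu) (pext nu) = pext nu.
Proof.
apply/ffunP => s; rewrite ffunE pext_sum.
have Hn : #|H|%:R != 0 :> algC by rewrite pnatr_eq0 -lt0n cardG_gt0.
rewrite ffunE; case: (boolP (s \in H)) => sH.
  rewrite (eq_bigr (fun _ => (nu s)^* / #|H|%:R)); last first.
    move=> x xH; rewrite ffunE groupM ?groupV // mulrA -rmorphM /=.
    by rewrite -lin_charM ?groupM ?groupV // mulgA mulgV mul1g.
  by rewrite sumr_const -mulr_natr; field.
rewrite big1 ?mulr0 // => x xH.
rewrite ffunE; case: ifP => [/(groupM xH)|_]; last by rewrite mulr0.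
by rewrite mulgA mulgV mul1g (negbTE sH).
Qed.

Lemma pext_adj (gT : finGroupType) (H : {group gT}) (nu : 'CF(H))
  (Hnu : nu \is a linear_char) : adj (pext nu) = pext nu.
Proof.
apply/ffunP => y; rewrite !ffunE groupV; case: ifP => // yH.
by rewrite rmorphM /= conjCK fmorphV /= rmorph_nat lin_charV_conj.
by rewrite rmorph0.
Qed.

Lemma tr_rh_pext (gT : finGroupType) d (rG : mx_representation algC [set: gT] d)
  (H : {group gT}) (nu : 'CF(H)) :
  \tr (rh rG (pext nu)) = #|H|%:R^-1 * \sum_(s in H) cfRepr rG s * (nu s)^*.
Proof.
rewrite /rh raddf_sum /=.
under eq_bigr do rewrite mxtraceZ -chiE.
by rewrite pext_sum; congr (_ * _); apply: eq_bigr => x _; rewrite mulrC.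
Qed.

Definition qq (gT : finGroupType) d (rG : mx_representation algC [set: gT] d)
  (H : {group gT}) (nu : 'CF(H)) : L2 gT := conv (eC rG) (pext nu).

Lemma qq_idem (gT : finGroupType) d (rG : mx_representation algC [set: gT] d)
  (Hirr : mx_irreducible rG) (H : {group gT}) (nu : 'CF(H))
  (Hnu : nu \is a linear_char) : conv (qq rG nu) (qq rG nu) = qq rG nu.
Proof.
rewrite /qq conv_assoc -(conv_assoc (pext nu)) -eC_central conv_assoc pext_idem //.
by rewrite -conv_assoc eC_idem.
Qed.

Lemma qq_adj (gT : finGroupType) d (rG : mx_representation algC [set: gT] d)
  (H : {group gT}) (nu : 'CF(H))
  (Hnu : nu \is a linear_char) : adj (qq rG nu) = qq rG nu.
Proof. by rewrite /qq adj_conv eC_adj pext_adj // -eC_central. Qed.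

Lemma rh_qq (gT : finGroupType) d (rG : mx_representation algC [set: gT] d)
  (Hirr : mx_irreducible rG) (H : {group gT}) (nu : 'CF(H)) :
  rh rG (qq rG nu) = rh rG (pext nu).
Proof. by rewrite /qq rh_conv rh_e // mul1mx. Qed.

Lemma rh_pext_idem (gT : finGroupType) d (rG : mx_representation algC [set: gT] d)
  (H : {group gT}) (nu : 'CF(H)) (Hnu : nu \is a linear_char) :
  rh rG (pext nu) *m rh rG (pext nu) = rh rG (pext nu).
Proof. by rewrite -rh_conv pext_idem. Qed.

Lemma rh0 (gT : finGroupType) d (rG : mx_representation algC [set: gT] d) :
  rh rG [ffun _ => 0] = 0.
Proof. by rewrite /rh big1 // => x _; rewrite ffunE scale0r. Qed.

Lemma dotL2_eq0 (gT : finGroupType) (f : L2 gT) :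
  dotL2 f f = 0 -> f = [ffun _ => 0].
Proof.
move=> H0; apply/ffunP => x; rewrite ffunE.
have : \sum_x `|f x| ^+ 2 = 0.
  by rewrite -[RHS]H0 /dotL2; apply: eq_bigr => y _; rewrite normCK.
move/eqP; rewrite psumr_eq0 => [/allP/(_ x)|y _]; last by rewrite exprn_ge0.
by rewrite mem_index_enum => /(_ isT)/eqP/eqP; rewrite sqrf_eq0 normr_eq0 => /eqP.
Qed.

Lemma linL2_0 (gT : finGroupType) (M : L2 gT -> L2 gT) :
  linL2 M -> M [ffun _ => 0] = [ffun _ => 0].
Proof.
move=> Mlin; have := Mlin 1 [ffun _ : gT => 0] [ffun _ : gT => 0].
have -> : [ffun x : gT => 1 * [ffun _ : gT => 0 : algC] x + [ffun _ : gT => 0 : algC] x]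
   = [ffun _ : gT => 0 : algC] by apply/ffunP => x; rewrite !ffunE mulr0 addr0.
move=> E; apply/ffunP => x; have := congr1 (fun f : L2 gT => f x) E.
by rewrite !ffunE mul1r -{1}[M _ x]addr0 => /addrI <-.
Qed.

Lemma linL2_sum (gT : finGroupType) (M : L2 gT -> L2 gT) (Mlin : linL2 M)
  (r : seq gT) (a : gT -> algC) (F : gT -> L2 gT) :
  M [ffun s => \sum_(x <- r) a x * F x s] = [ffun s => \sum_(x <- r) a x * M (F x) s].
Proof.
elim: r => [|y r IH].
  have -> : [ffun s => \sum_(x <- [::]) a x * F x s] = [ffun _ => 0].
    by apply/ffunP => s; rewrite !ffunE big_nil.
  by rewrite linL2_0 //; apply/ffunP => s; rewrite !ffunE big_nil.
have -> : [ffun s => \sum_(x <- y :: r) a x * F x s] =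
  [ffun s => a y * F y s + [ffun s => \sum_(x <- r) a x * F x s] s].
  by apply/ffunP => s; rewrite !ffunE big_cons.
rewrite Mlin IH; apply/ffunP => s; rewrite !ffunE big_cons //.
Qed.

Lemma mat_Pi (gT : finGroupType) d (rG : mx_representation algC [set: gT] d)
  (H : {group gT}) (nu : 'CF(H)) g1 g2 :
  mat (PiChi (cfRepr rG) \o PiNuExt nu) g1 g2 = qq rG nu (g2^-1 * g1)%g.
Proof.
rewrite /mat /= /PiChi /PiNuExt -/(eC rG) -conv_assoc eC_central conv_assoc.
by rewrite conv_deltaE.
Qed.

Lemma colspaceP (gT : finGroupType) d (rG : mx_representation algC [set: gT] d)
  (v : 'cV[algC]_d) (C : algC) (q : L2 gT)
  (Hg : forall g1 g2, gram rG v g1 g2 = C * q (g2^-1 * g1)%g) (C0 : C != 0) f :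
  in_colspace (gram rG v) f <-> exists w, f = conv w q.
Proof.
split.
  case=> c ->; exists [ffun g => c g * C]; apply/ffunP => s; rewrite !ffunE.
  by apply: eq_bigr => g _; rewrite Hg ffunE mulrA.
case=> w ->; exists (fun g => w g / C); apply/ffunP => s; rewrite !ffunE.
by apply: eq_bigr => g _; rewrite Hg mulrA divfK.
Qed.

Lemma frame_nz (gT : finGroupType) d (rG : mx_representation algC [set: gT] d)
  (v : 'cV[algC]_d) : group_frame rG v -> (0 < d)%N -> dotV v v != 0.
Proof.
move=> Hf dgt0; apply/eqP => H0.
have v0 : v = 0.
  apply/matrixP => i j; rewrite mxE; rewrite [j]ord1.
  have : \sum_k `|v k 0| ^+ 2 = 0.
    by rewrite -[RHS]H0 /dotV; apply: eq_bigr => y _; rewrite normCK.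
  move/eqP; rewrite psumr_eq0 => [/allP/(_ i)|y _]; last by rewrite exprn_ge0.
  by rewrite mem_index_enum => /(_ isT)/eqP/eqP; rewrite sqrf_eq0 normr_eq0 => /eqP.
have [c E] := Hf (const_mx 1).
have := congr1 (fun w : 'cV[algC]_d => w (Ordinal dgt0) 0) E.
rewrite mxE summxE big1 ?oner_eq0 // => [/eqP|g _]; first by rewrite oner_eq0.
by rewrite v0 mulmx0 scaler0 mxE.
Qed.

Lemma tr_sum (I : finType) d (F : I -> 'M[algC]_d) :
  \tr (\sum_i F i) = \sum_i \tr (F i).
Proof. by rewrite raddf_sum. Qed.

Lemma rhs_expand (gT : finGroupType) d (rG : mx_representation algC [set: gT] d)
  (H1 H2 : {group gT}) (nu1 : 'CF(H1)) (nu2 : 'CF(H2)) (a s g : gT) :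
  (#|H1|%:R * #|H2|%:R)^-1 *
      \sum_(h1 in H1) \sum_(h2 in H2)
        (nu2 h2)^* * cfRepr rG (a^-1 * h2 * s^-1 * g * h1)%g * (nu1 h1)^*
  = \tr (rh rG (pext nu1) *m rG a^-1%g *m rh rG (pext nu2) *m rG (s^-1 * g)%g).
Proof.
have E : rh rG (pext nu1) *m rG a^-1%g *m rh rG (pext nu2) *m rG (s^-1 * g)%g =
  \sum_x \sum_y (pext nu1 x * pext nu2 y) *: rG (x * a^-1 * y * (s^-1 * g))%g.
  rewrite /rh !mulmx_suml; apply: eq_bigr => x _.
  rewrite mulmx_sumr mulmx_suml; apply: eq_bigr => y _.
  by rewrite -!scalemxAl -!scalemxAr -!scalemxAl scalerA !rGM !mulmxA.
have E2 : \tr (rh rG (pext nu1) *m rG a^-1%g *m rh rG (pext nu2) *m rG (s^-1 * g)%g)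
  = \sum_x pext nu1 x * \sum_y pext nu2 y * cfRepr rG (x * a^-1 * y * (s^-1 * g))%g.
  rewrite E tr_sum; apply: eq_bigr => x _; rewrite tr_sum mulr_sumr.
  by apply: eq_bigr => y _; rewrite mxtraceZ -chiE mulrA.
rewrite E2.
rewrite pext_sum invfM -mulrA; apply: (congr1 (GRing.mul _)).
rewrite mulr_sumr; apply: eq_bigr => x xH.
rewrite pext_sum mulrCA; apply: (congr1 (GRing.mul _)).
rewrite mulr_sumr; apply: eq_bigr => y yH.
have -> : cfRepr rG (x * a^-1 * y * (s^-1 * g))%g =
          cfRepr rG (a^-1 * y * s^-1 * g * x)%g.
  by rewrite -!mulgA chiC !mulgA.
by rewrite mulrC mulrA.
Qed.

Theorem mainTheorem5 (gT : finGroupType) (d : nat)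
  (rG : mx_representation algC [set: gT] d)
  (Hirr : mx_irreducible rG) (Hunit : unitary_repr rG)
  (H1 H2 : {group gT}) (nu1 : 'CF(H1)) (nu2 : 'CF(H2))
  (Hnu1 : nu1 \is a linear_char) (Hnu2 : nu2 \is a linear_char)
  (Hmult1 : \sum_(s in H1) cfRepr rG s * (nu1 s)^* = #|H1|%:R)
  (Hmult2 : \sum_(s in H2) cfRepr rG s * (nu2 s)^* = #|H2|%:R)
  (v1 v2 : 'cV[algC]_d)
  (Hframe1 : group_frame rG v1) (Hframe2 : group_frame rG v2)
  (Hgram1 : forall g1 g2 : gT, gram rG v1 g1 g2 =
     dotV v1 v1 * #|gT|%:R / d%:R * mat (PiChi (cfRepr rG) \o PiNuExt nu1) g1 g2)
  (Hgram2 : forall g1 g2 : gT, gram rG v2 g1 g2 =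
     dotV v2 v2 * #|gT|%:R / d%:R * mat (PiChi (cfRepr rG) \o PiNuExt nu2) g1 g2)
  (M : {ffun gT -> algC} -> {ffun gT -> algC})
  (Mlin : linL2 M)
  (Mmaps : forall f, in_colspace (gram rG v1) f -> in_colspace (gram rG v2) (M f))
  (Monto : forall w, in_colspace (gram rG v2) w ->
     exists2 f, in_colspace (gram rG v1) f & M f = w)
  (Misom : forall f f', in_colspace (gram rG v1) f -> in_colspace (gram rG v1) f' ->
     dotL2 (M f) (M f') = dotL2 f f')
  (MGlin : forall (g : gT) f, in_colspace (gram rG v1) f ->
     M (lreg g f) = lreg g (M f))
  (Mperp : forall f, (forall w, in_colspace (gram rG v1) w -> dotL2 f w = 0) ->
     M f = 0) :
  forall a : gT, exists lam : algC, forall s g : gT,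
    lam * mat M s g =
      (#|H1|%:R * #|H2|%:R)^-1 *
      \sum_(h1 in H1) \sum_(h2 in H2)
        (nu2 h2)^* * cfRepr rG (a^-1 * h2 * s^-1 * g * h1)%g * (nu1 h1)^*.
Proof.
move=> a.
have dgt0 : (0 < d)%N by case/mx_irrP: Hirr.
have d0 : d%:R != 0 :> algC by rewrite pnatr_eq0 -lt0n.
have Gn0 := cardgT_neq0 gT.
set q1 := qq rG nu1; set q2 := qq rG nu2.
set P1 := rh rG (pext nu1); set P2 := rh rG (pext nu2).
have C1n0 : dotV v1 v1 * #|gT|%:R / d%:R != 0.
  by rewrite !mulf_neq0 ?invr_eq0 //; apply: frame_nz; eassumption.
have C2n0 : dotV v2 v2 * #|gT|%:R / d%:R != 0.
  by rewrite !mulf_neq0 ?invr_eq0 //; apply: frame_nz; eassumption.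
have V1 := colspaceP (fun g1 g2 => etrans (Hgram1 g1 g2) (congr1 _ (mat_Pi rG nu1 g1 g2))) C1n0.
have V2 := colspaceP (fun g1 g2 => etrans (Hgram2 g1 g2) (congr1 _ (mat_Pi rG nu2 g1 g2))) C2n0.
have q1V : forall x, in_colspace (gram rG v1) (lreg x q1).
  by move=> x; apply/V1; exists (delta x).
have q1E : q1 = lreg 1%g q1.
  by apply/ffunP => s; rewrite /lreg conv_deltaE invg1 mul1g.
have q1V' : in_colspace (gram rG v1) q1 by rewrite q1E.
set m := M q1.
have Mconv : forall f, M f = conv f m.
  move=> f.
  have E1 : M (conv f q1) = conv f m.
    have -> : conv f q1 = [ffun s => \sum_(x <- index_enum gT) f x * (lreg x q1) s].
      by apply/ffunP => s; rewrite !ffunE; apply: eq_bigr => x _; rewrite /lreg conv_deltaE.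
    rewrite linL2_sum //; apply/ffunP => s; rewrite !ffunE; apply: eq_bigr => x _.
    by rewrite MGlin // /lreg conv_deltaE.
  have E2 : M [ffun s => f s - conv f q1 s] = [ffun _ => 0].
    apply: Mperp => w /V1 [w' ->].
    have -> : dotL2 [ffun s => f s - conv f q1 s] (conv w' q1) =
       dotL2 f (conv w' q1) - dotL2 (conv f q1) (conv w' q1).
      rewrite /dotL2 -sumrB; apply: eq_bigr => x _; by rewrite ffunE mulrBl.
    by rewrite dot_conv qq_adj // conv_assoc qq_idem // subrr.
  have fE : f = [ffun s => 1 * [ffun s => f s - conv f q1 s] s + conv f q1 s].
    by apply/ffunP => s; rewrite !ffunE mul1r subrK.
  rewrite {1}fE Mlin E2 E1; apply/ffunP => s; rewrite !ffunE mulr0 add0r //.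
have mq1 : conv q1 m = m by rewrite -Mconv.
have mq2 : conv m q2 = m.
  have [w wE] := (V2 _).1 (Mmaps _ q1V').
  by rewrite -/m in wE; rewrite wE conv_assoc qq_idem.
set c := cfRepr rG 1%g / #|gT|%:R.
have c0 : c != 0 by rewrite /c cfRepr1 mulf_neq0 ?invr_eq0.
have rhm : rh rG m = rh rG m *m P2 by rewrite -{1}mq2 rh_conv rh_qq.
have mform : forall y, m y = c * \tr (P1 *m rh rG m *m P2 *m rG y^-1%g).
  move=> y; rewrite -{1}mq1 /q1 /qq conv_assoc eC_central /eC conv_e ffunE.
  by rewrite rh_conv -/P1 {1}rhm mulmxA.
have trP : forall (H : {group gT}) (nu : 'CF(H)),
    \sum_(s in H) cfRepr rG s * (nu s)^* = #|H|%:R -> \tr (rh rG (pext nu)) = 1.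
  move=> H nu Hm; rewrite tr_rh_pext Hm mulVf //.
  by rewrite pnatr_eq0 -lt0n cardG_gt0.
have rk1 : \rank P1 = 1%N by apply: idem_rank1; [apply: rh_pext_idem | apply: trP].
have rk2 : \rank P2 = 1%N by apply: idem_rank1; [apply: rh_pext_idem | apply: trP].
have [U [phi Hphi]] := rank1_sandwich rk1 rk2.
have mform2 : forall y, m y = c * phi (rh rG m) * \tr (U *m rG y^-1%g).
  by move=> y; rewrite mform Hphi -scalemxAl mxtraceZ mulrA.
have m_nz : phi (rh rG m) != 0.
  apply/eqP => phi0.
  have m0 : m = [ffun _ => 0].
    by apply/ffunP => y; rewrite mform2 phi0 mulr0 mul0r ffunE.
  have : dotL2 q1 q1 = 0.
    rewrite -Misom // -/m m0 /dotL2 big1 // => x _; by rewrite ffunE mul0r.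
  move/dotL2_eq0 => q10.
  have := trP _ _ Hmult1; rewrite -(rh_qq Hirr) -/q1 q10 rh0 mxtrace0 => /eqP.
  by rewrite eq_sym oner_eq0.
exists (phi (rG a^-1%g) / (c * phi (rh rG m))) => s g.
rewrite rhs_expand -/P1 -/P2 Hphi -scalemxAl mxtraceZ.
rewrite /mat Mconv conv_deltaE mform2 invMg invgK.
by field; apply/andP.
Qed.
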